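(* The sequence $\left\{\dfrac{\exp(H_n)\log(H_n)}{n}\right\}_{n=1}^\infty$ is monotonically increasing.
   Context: $H_n=1+\frac12+\cdots+\frac1n$ is the $n$-th harmonic number. *)

(* Defs.v *)
From Stdlib Require Import Reals.
Open Scope R_scope.

Fixpoint H (n : nat) : R :=
  match n with
  | O => 0
  | S m => H m + / INR (S m)
  end.

Definition a (n : nat) : R := exp (H n) * ln (H n) / INR n.

(* Main.v *)
Require Import Defs.
From Stdlib Require Import Reals Lra Lia Psatz.
Open Scope R_scope.

Lemma ln_le_xm1 y : 0 < y -> ln y <= y - 1.
Proof. intros Hy. pose proof (exp_ineq1_le (ln y)) as E. rewrite exp_ln in E; lra. Qed.

Lemma H_S n : H (S n) = H n + / INR (S n).
Proof. reflexivity. Qed.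

Lemma H_ge n : (2 <= n)%nat -> 3/2 <= H n.
Proof.
  induction 1.
  - simpl. lra.
  - rewrite H_S. assert (0 < / INR (S m)) by (apply Rinv_0_lt_compat, lt_0_INR; lia). lra.
Qed.

Lemma H_sqrt n : (2 <= n)%nat -> H n <= sqrt (INR n) + /2.
Proof.
  intros Hn. destruct (Nat.eq_dec n 2) as [->|Hn2].
  { simpl. assert (1.4 <= sqrt 2). { assert (Q : sqrt (1.4*1.4) <= sqrt 2) by (apply sqrt_le_1_alt; lra). rewrite sqrt_square in Q; lra. }
    replace (1+1) with 2 in * by lra. lra. }
  assert (H3 : (3 <= n)%nat) by lia. clear Hn Hn2.
  induction H3.
  - simpl. assert (1.7 <= sqrt 3). { assert (Q : sqrt (1.7*1.7) <= sqrt 3) by (apply sqrt_le_1_alt; lra). rewrite sqrt_square in Q; lra. }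
    replace (1+1+1) with 3 in * by lra. lra.
  - rewrite H_S. rewrite S_INR.
    assert (Hm : 3 <= INR m) by (replace 3 with (INR 3) by (simpl; lra); apply le_INR; lia).
    set (t := sqrt (INR m + 1)). set (u := sqrt (INR m)).
    assert (Ht : t * t = INR m + 1) by (apply sqrt_sqrt; lra).
    assert (Hu : u * u = INR m) by (apply sqrt_sqrt; lra).
    assert (0 <= t) by apply sqrt_pos. assert (0 <= u) by apply sqrt_pos.
    assert (u <= t) by (apply sqrt_le_1_alt; lra).
    assert (2 <= t) by nra.
    assert (/ (INR m + 1) <= t - u).
    { apply (Rmult_le_reg_r (INR m + 1)); [lra|]. rewrite Rinv_l by lra.
      assert ((t - u) * (t + u) = 1) by nra. nra. }
    fold u in IHle. lra.
Qed.

Theorem mainTheorem18 : forall n : nat, (1 <= n)%nat -> a n < a (S n).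
Proof.
  intros n Hn. unfold a.
  destruct (Nat.eq_dec n 1) as [->|Hn1].
  { simpl. replace (0 + / 1) with 1 by lra. rewrite ln_1.
    assert (0 < ln (1 + / (1+1))) by (rewrite <- ln_1; apply ln_increasing; lra).
    assert (0 < exp (1 + / (1+1))) by apply exp_pos.
    replace (1 + 1) with 2 in * by lra.
    rewrite Rmult_0_r. unfold Rdiv. rewrite Rmult_0_l.
    apply Rmult_lt_0_compat; [apply Rmult_lt_0_compat; lra|apply Rinv_0_lt_compat; lra]. }
  assert (H2 : (2 <= n)%nat) by lia.
  pose proof (H_ge n H2) as Hh. pose proof (H_sqrt n H2) as Hs.
  rewrite H_S. rewrite S_INR.
  set (h := H n) in *. set (N := INR n).
  assert (HN : 2 <= N) by (replace 2 with (INR 2) by (simpl; lra); apply le_INR; lia).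
  set (x := / (N + 1)).
  assert (Hx : x * (N + 1) = 1) by (unfold x; field; lra).
  assert (0 < x) by (unfold x; apply Rinv_0_lt_compat; lra).
  set (s := sqrt N) in *.
  change (sqrt (INR n)) with s in Hs.
  assert (Hss : s * s = N) by (apply sqrt_sqrt; lra).
  assert (0 <= s) by apply sqrt_pos.
  set (L := ln h).
  assert (HL0 : 0 < L) by (unfold L; rewrite <- ln_1; apply ln_increasing; lra).
  assert (HL1 : L <= h - 1) by (apply ln_le_xm1; lra).
  assert (HLd : x / (h + x) <= ln (h + x) - L).
  { unfold L.
    assert (Hq : 0 < h / (h + x)) by (apply Rdiv_lt_0_compat; lra).
    pose proof (ln_le_xm1 _ Hq) as Q.
    unfold Rdiv in Q. rewrite ln_mult in Q by (try apply Rinv_0_lt_compat; lra). rewrite ln_Rinv in Q by lra.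
    assert (h * / (h + x) - 1 = - (x / (h + x))) by (field; lra). lra. }
  rewrite exp_plus.
  set (E := exp h). assert (0 < E) by apply exp_pos.
  assert (Hex : 1 + x <= exp x) by apply exp_ineq1_le.
  set (L' := ln (h + x)) in *.
  set (d := x / (h + x)) in *.
  assert (Hd : d * (h + x) = x) by (unfold d; field; lra).
  assert (0 < d) by (unfold d; apply Rdiv_lt_0_compat; lra).
  assert (Key : L * ((N + 1) * h + 1) < N * (N + 2)).
  { assert (L * ((N + 1) * h + 1) <= (h - 1) * ((N + 1) * h + 1)).
    { apply Rmult_le_compat_r; [|lra]. assert (0 <= (N+1)*h) by (apply Rmult_le_pos; lra). lra. }
    assert ((h - 1) * ((N + 1) * h + 1) <= (s - /2) * ((N + 1) * (s + /2) + 1)).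
    { apply Rmult_le_compat; [lra| assert (0 <= (N+1)*h) by (apply Rmult_le_pos; lra); lra | lra |].
      assert ((N+1)*h <= (N+1)*(s+/2)) by (apply Rmult_le_compat_l; lra). lra. }
    assert (Hs2 : s < 1.25 * N + 0.75) by (pose proof (pow2_ge_0 (s - 1)); nra).
    assert (E2 : (s - /2) * ((N + 1) * (s + /2) + 1) = (N+1)*(s*s - /4) + s - /2) by field.
    rewrite Hss in E2. lra. }
  assert (Hd2 : d * ((N + 1) * h + 1) = 1).
  { replace ((N + 1) * h + 1) with ((N+1) * (h + x)) by (rewrite Rmult_plus_distr_l; lra).
    rewrite <- Rmult_assoc, (Rmult_comm d), Rmult_assoc, Hd. lra. }
  assert (HK : L < N * (N + 2) * d) by nra.
  apply (Rmult_lt_reg_r (N * (N + 1))); [nra|].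
  replace (E * L / N * (N * (N + 1))) with (E * L * (N + 1)) by (field; lra).
  replace (E * exp x * L' / (N + 1) * (N * (N + 1))) with (E * (exp x * L' * N)) by (field; lra).
  rewrite Rmult_assoc. apply Rmult_lt_compat_l; [lra|].
  assert (0 < L') by lra.
  assert ((1 + x) * L' * N <= exp x * L' * N) by (apply Rmult_le_compat_r; [lra|]; apply Rmult_le_compat_r; lra).
  assert (L * (N + 1) < (1 + x) * L' * N); [|lra].
  assert (Hx2 : 1 + x = (N + 2) * x) by nra.
  rewrite Hx2.
  apply (Rmult_lt_reg_r (N + 1)); [lra|].
  replace ((N + 2) * x * L' * N * (N + 1)) with ((N + 2) * N * L' * (x * (N + 1))) by ring.
  rewrite Hx.
  assert (N*(N+2)*(L+d) <= N*(N+2)*L') by (apply Rmult_le_compat_l; [apply Rmult_le_pos|]; lra).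
  lra.
Qed.
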